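(* Let $\Phi$ be a finite crystallographic root system and let $\Psi\subset\Phi^+$ be an antichain in the root poset. Then (i) $\langle\beta,\gamma\rangle\le 0$ for all $\beta\ne\gamma$ in $\Psi$; (ii) there are at most $|\Psi|-1$ (unordered) pairs $\{\beta,\gamma\}$ of distinct roots in $\Psi$ for which $\mathcal{X}_\beta$ and $\mathcal{X}_\gamma$ are dependent; (iii) the graph on the vertex set $\Psi$ with an edge between $\beta\ne\gamma$ whenever $\mathcal{X}_\beta$ and $\mathcal{X}_\gamma$ are dependent has maximal vertex degree at most $3$.
   Context: $\Phi\subset V$ is a finite crystallographic root system (inner product $\langle\cdot,\cdot\rangle$) with simple roots $\Delta$, positive roots $\Phi^+$ and Weyl group $W$. The root poset is the partial order on $\Phi^+$ generated by $\beta\prec\gamma$ whenever $\gamma-\beta\in\Delta$; an antichain is a set of pairwise incomparable elements. For $\beta\in\Phi^+$, $\mathcal{X}_\beta$ is the Bernoulli random variable on $W$ (uniform) with $\mathcal{X}_\beta(w)=1$ if $w(\beta)\in-\Phi^+$ and $0$ otherwise. *)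

(* Defs.v *)
From HB Require Import structures.
From mathcomp Require Import all_boot all_order all_algebra.
From mathcomp Require Import boolp reals.
From Stdlib Require Import Relations.Relation_Operators.

Set Implicit Arguments.
Unset Strict Implicit.
Unset Printing Implicit Defensive.

Import Order.TTheory GRing.Theory Num.Theory.
Local Open Scope ring_scope.

Section RootSystems.
Variables (R : realType) (n : nat).
Notation vec := 'rV[R]_n.

Definition dot (u v : vec) : R := (u *m v^T) ord0 ord0.

(* the reflection s_a as a matrix acting on row vectors by v |-> v *m s_a:
   v *m refl_mx a = v - (2 <v,a>/<a,a>) a *)
Definition refl_mx (a : vec) : 'M[R]_n :=
  1%:M - (2 / dot a a) *: (a^T *m a).

Definition in_span (s : seq vec) (v : vec) : Prop :=
  exists c : 'I_(size s) -> R, v = \sum_(i < size s) c i *: s`_i.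

Definition is_root_system (Phi : seq vec) : Prop :=
  [/\ uniq Phi, 0 \notin Phi,
      (forall v : vec, in_span Phi v) /\
      (forall a b, a \in Phi -> b \in Phi -> b *m refl_mx a \in Phi),
      (forall a b, a \in Phi -> b \in Phi ->
         exists z : int, 2 * dot b a / dot a a = z%:~R) &
      (forall a (c : R), a \in Phi -> c *: a \in Phi -> c = 1 \/ c = -1)].

Definition nonneg_int_comb (Delta : seq vec) (v : vec) : Prop :=
  exists c : 'I_(size Delta) -> nat,
    v = \sum_(i < size Delta) (c i)%:R *: Delta`_i.

Definition lin_indep (s : seq vec) : Prop :=
  forall c : 'I_(size s) -> R,
    \sum_(i < size s) c i *: s`_i = 0 -> forall i, c i = 0.

Definition is_simple_system (Phi Delta : seq vec) : Prop :=
  [/\ uniq Delta, {subset Delta <= Phi}, lin_indep Delta &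
      forall a, a \in Phi -> nonneg_int_comb Delta a \/ nonneg_int_comb Delta (- a)].

Definition is_pos_root (Phi Delta : seq vec) (a : vec) : Prop :=
  a \in Phi /\ nonneg_int_comb Delta a.

Definition rp_cover (Phi Delta : seq vec) (b g : vec) : Prop :=
  [/\ is_pos_root Phi Delta b, is_pos_root Phi Delta g & g - b \in Delta].

Definition rp_le (Phi Delta : seq vec) : vec -> vec -> Prop :=
  clos_refl_trans vec (rp_cover Phi Delta).

Definition is_antichain (Phi Delta Psi : seq vec) : Prop :=
  [/\ uniq Psi, (forall b, b \in Psi -> is_pos_root Phi Delta b) &
      forall b g, b \in Psi -> g \in Psi -> b != g -> ~ rp_le Phi Delta b g].

Definition in_weyl (Phi : seq vec) (w : 'M[R]_n) : Prop :=
  exists s : seq vec, {subset s <= Phi} /\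
    w = foldr (fun a m => refl_mx a *m m) 1%:M s.

Definition weyl_enum (Phi : seq vec) (Wl : seq 'M[R]_n) : Prop :=
  uniq Wl /\ forall w, w \in Wl <-> in_weyl Phi w.

Definition Xrv (Phi Delta : seq vec) (b : vec) (w : 'M[R]_n) : bool :=
  `[< is_pos_root Phi Delta (- (b *m w)) >].

Definition prob (Wl : seq 'M[R]_n) (E : pred 'M[R]_n) : R :=
  (count E Wl)%:R / (size Wl)%:R.

Definition indep (Wl : seq 'M[R]_n) (X Y : 'M[R]_n -> bool) : Prop :=
  forall x y : bool,
    prob Wl (fun w => (X w == x) && (Y w == y)) =
    prob Wl (fun w => X w == x) * prob Wl (fun w => Y w == y).

Definition dependent (Phi Delta : seq vec) (Wl : seq 'M[R]_n) (b g : vec) : bool :=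
  ~~ `[< indep Wl (Xrv Phi Delta b) (Xrv Phi Delta g) >].

End RootSystems.

(* Main.v *)
Require Import Defs.
From HB Require Import structures.
From mathcomp Require Import all_boot all_order all_algebra.
From mathcomp Require Import boolp reals.
From mathcomp Require Import ring lra zify.
From Stdlib Require Import Relations.Relation_Operators.
Import Order.TTheory GRing.Theory Num.Theory.
Local Open Scope ring_scope.
Set Implicit Arguments.
Unset Strict Implicit.
Unset Printing Implicit Defensive.


Section Basics.
Variables (R : realType) (n : nat).
Notation vec := 'rV[R]_n.

Lemma dotE (u v : vec) : dot u v = \sum_k u 0 k * v 0 k.
Proof. by rewrite /dot !mxE; apply: eq_bigr => k _; rewrite mxE. Qed.

Lemma dotC (u v : vec) : dot u v = dot v u.
Proof. by rewrite !dotE; apply: eq_bigr => k _; rewrite mulrC. Qed.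

Lemma dotDl (u v w : vec) : dot (u + v) w = dot u w + dot v w.
Proof. by rewrite !dotE -big_split; apply: eq_bigr => k _; rewrite !mxE mulrDl. Qed.

Lemma dotZl a (u w : vec) : dot (a *: u) w = a * dot u w.
Proof. by rewrite !dotE mulr_sumr; apply: eq_bigr => k _; rewrite !mxE mulrA. Qed.

Lemma dotNl (u w : vec) : dot (- u) w = - dot u w.
Proof. by rewrite -scaleN1r dotZl mulN1r. Qed.

Lemma dotBl (u v w : vec) : dot (u - v) w = dot u w - dot v w.
Proof. by rewrite dotDl dotNl. Qed.

Lemma dotDr (u v w : vec) : dot w (u + v) = dot w u + dot w v.
Proof. by rewrite dotC dotDl !(dotC w). Qed.
Lemma dotZr a (u w : vec) : dot w (a *: u) = a * dot w u.
Proof. by rewrite dotC dotZl dotC. Qed.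
Lemma dotNr (u w : vec) : dot w (- u) = - dot w u.
Proof. by rewrite dotC dotNl dotC. Qed.
Lemma dotBr (u v w : vec) : dot w (u - v) = dot w u - dot w v.
Proof. by rewrite dotDr dotNr. Qed.
Lemma dot0l (w : vec) : dot 0 w = 0.
Proof. by rewrite -(scale0r 0) dotZl mul0r. Qed.
Lemma dot0r (w : vec) : dot w 0 = 0.
Proof. by rewrite dotC dot0l. Qed.

Lemma dot_suml I (r : seq I) (P : pred I) (F : I -> vec) w :
  dot (\sum_(i <- r | P i) F i) w = \sum_(i <- r | P i) dot (F i) w.
Proof.
elim/big_rec2: _ => [|i x y _ <-]; first by rewrite dot0l.
by rewrite dotDl.
Qed.
Lemma dot_sumr I (r : seq I) (P : pred I) (F : I -> vec) w :
  dot w (\sum_(i <- r | P i) F i) = \sum_(i <- r | P i) dot w (F i).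
Proof. rewrite dotC dot_suml; apply: eq_bigr => i _; exact: dotC. Qed.

Lemma dot_ge0 (u : vec) : 0 <= dot u u.
Proof. rewrite dotE; apply: sumr_ge0 => k _; exact: sqr_ge0. Qed.

Lemma dot_eq0 (u : vec) : (dot u u == 0) = (u == 0).
Proof.
apply/idP/idP; last by move/eqP->; rewrite dot0l.
rewrite dotE psumr_eq0; last by move=> k _; exact: sqr_ge0.
move/allP => H; apply/eqP/rowP => k; rewrite mxE.
have := H k (mem_index_enum k); rewrite mulf_eq0 orbb => /eqP ->; by [].
Qed.

Lemma dot_gt0 (u : vec) : u != 0 -> 0 < dot u u.
Proof. by move=> nz; rewrite lt_def dot_eq0 nz dot_ge0. Qed.

Lemma refl_mxE (a v : vec) : v *m refl_mx a = v - (2 / dot a a * dot v a) *: a.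
Proof.
rewrite /refl_mx mulmxBr mulmx1 -scalemxAr mulmxA.
rewrite [v *m a^T]mx11_scalar mul_scalar_mx scalerA.
by [].
Qed.

Lemma refl_mxK (a : vec) : a != 0 -> refl_mx a *m refl_mx a = 1%:M.
Proof.
move=> nz; have d0 : dot a a != 0 by rewrite dot_eq0.
rewrite /refl_mx mulmxBr mulmx1 mulmxBl mul1mx -!scalemxAr -!scalemxAl.
rewrite scalerA !mulmxA -[a^T *m a *m a^T]mulmxA [a *m a^T]mx11_scalar.
rewrite mul_mx_scalar -scalemxAl scalerA -/(dot a a).
set P := a^T *m a; set c := 2 / dot a a.
rewrite -scalerBl -addrA -opprD -scalerDl -[RHS]subr0; congr (_ - _).
suff -> : c + (c - c * c * dot a a) = 0 by rewrite scale0r.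
by rewrite /c; field.
Qed.

End Basics.


Section Roots.
Variables (R : realType) (n : nat) (Phi Delta : seq 'rV[R]_n).
Notation vec := 'rV[R]_n.
Hypothesis RS : is_root_system Phi.
Hypothesis SS : is_simple_system Phi Delta.

Lemma rs_root_nz a : a \in Phi -> a != 0.
Proof. by case: RS => _ H0 _ _ _ aP; apply: contraNneq H0 => <-. Qed.

Lemma rs_root_refl a b : a \in Phi -> b \in Phi -> b *m refl_mx a \in Phi.
Proof. by case: RS => _ _ [_ H] _ _; exact: H. Qed.

Lemma rootNeg a : a \in Phi -> - a \in Phi.
Proof.
move=> aP; have := rs_root_refl aP aP; rewrite refl_mxE.
have d0 : dot a a != 0 by rewrite dot_eq0 rs_root_nz.
have -> : 2 / dot a a * dot a a = 2 by field.
by rewrite scaler_nat mulr2n opprD addNKr.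
Qed.

Lemma weyl_root w b : in_weyl Phi w -> b \in Phi -> b *m w \in Phi.
Proof.
case=> s [sP ->]; elim: s sP b => [|a s IH] sP b bP /=; first by rewrite mulmx1.
rewrite mulmxA; apply: IH; first by move=> x xs; apply: sP; rewrite inE xs orbT.
by apply: rs_root_refl => //; apply: sP; rewrite inE eqxx.
Qed.

Lemma weyl_refl w a : in_weyl Phi w -> a \in Phi -> in_weyl Phi (refl_mx a *m w).
Proof.
case=> s [sP ->] aP; exists (a :: s); split => //.
by move=> x; rewrite inE => /orP [/eqP ->|/sP].
Qed.

Lemma refl_self (a : vec) : a != 0 -> a *m refl_mx a = - a.
Proof.
move=> nz; have d0 : dot a a != 0 by rewrite dot_eq0.
rewrite refl_mxE; have -> : 2 / dot a a * dot a a = 2 by field.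
by rewrite scaler_nat mulr2n opprD addNKr.
Qed.

Lemma refl_orth (a g : vec) : dot g a = 0 -> g *m refl_mx a = g.
Proof. by move=> h; rewrite refl_mxE h mulr0 scale0r subr0. Qed.

Notation m := (size Delta).

Lemma coord_uniq (a b : 'I_m -> R) :
  \sum_(i < m) a i *: Delta`_i = \sum_(i < m) b i *: Delta`_i -> forall i, a i = b i.
Proof.
case: SS => _ _ LI _ E i; apply/eqP; rewrite -subr_eq0; apply/eqP.
apply: (LI (fun i => a i - b i)).
rewrite (eq_bigr (fun i => a i *: Delta`_i - b i *: Delta`_i)); last by move=> j _; rewrite scalerBl.
by rewrite sumrB E subrr.
Qed.

Lemma nncomb0 a : nonneg_int_comb Delta a -> nonneg_int_comb Delta (- a) -> a = 0.
Proof.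
case=> c Hc [d Hd].
have : \sum_(i < m) ((c i + d i)%:R : R) *: Delta`_i = \sum_(i < m) 0 *: Delta`_i.
  rewrite (eq_bigr (fun i => (c i)%:R *: Delta`_i + (d i)%:R *: Delta`_i)).
    by rewrite big_split /= -Hc -Hd subrr; apply/esym/big1 => i _; rewrite scale0r.
  by move=> i _; rewrite natrD scalerDl.
move/coord_uniq => H; rewrite Hc; apply: big1 => i _.
have := H i; move/eqP; rewrite pnatr_eq0 addn_eq0 => /andP [/eqP -> _].
by rewrite scale0r.
Qed.

Lemma pos_or_neg a : a \in Phi -> is_pos_root Phi Delta a \/ is_pos_root Phi Delta (- a).
Proof.
move=> aP; case: SS => _ _ _ H; case: (H a aP) => h; [left|right] => //.
by split => //; exact: rootNeg.
Qed.

Lemma not_pos_neg a : is_pos_root Phi Delta a -> is_pos_root Phi Delta (- a) -> False.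
Proof.
move=> [aP ha] [_ hb]; have := nncomb0 ha hb => a0.
by move: (rs_root_nz aP); rewrite a0 eqxx.
Qed.

Lemma cryst a b : a \in Phi -> b \in Phi -> exists z : int, 2 * dot b a / dot a a = z%:~R.
Proof. by case: RS => _ _ _ H _; exact: H. Qed.

Lemma rs_root_sub a b : a \in Phi -> b \in Phi -> 0 < dot a b -> a != b -> a - b \in Phi.
Proof.
move=> aP bP pab nab.
have da : 0 < dot a a by apply: dot_gt0; exact: rs_root_nz.
have db : 0 < dot b b by apply: dot_gt0; exact: rs_root_nz.
have [z1 H1] := cryst bP aP.
have [z2 H2] := cryst aP bP.
have z1p : (0 < z1)%R.
  by rewrite -(ltr0z R) -H1; apply: divr_gt0 => //; rewrite mulr_gt0.
have z2p : (0 < z2)%R.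
  by rewrite -(ltr0z R) -H2; apply: divr_gt0 => //; rewrite mulr_gt0 // dotC.
have [e1|n1] := eqVneq z1 1.
  have := rs_root_refl bP aP; rewrite refl_mxE.
  have -> : 2 / dot b b * dot a b = 1 by rewrite mulrAC H1 e1.
  by rewrite scale1r.
have [e2|n2] := eqVneq z2 1.
  have := rootNeg (rs_root_refl aP bP); rewrite refl_mxE.
  have -> : 2 / dot a a * dot b a = 1 by rewrite mulrAC H2 e2.
  by rewrite scale1r opprB.
have g1 : (2 <= z1)%R by move: n1 z1p => /eqP; lia.
have g2 : (2 <= z2)%R by move: n2 z2p => /eqP; lia.
have g1' : 2 <= 2 * dot a b / dot b b by rewrite H1 (ler_int R 2 z1).
have g2' : 2 <= 2 * dot b a / dot a a by rewrite H2 (ler_int R 2 z2).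
have h1 : dot b b <= dot a b.
  by move: g1'; rewrite ler_pdivlMr // ler_pM2l.
have h2 : dot a a <= dot a b.
  by move: g2'; rewrite ler_pdivlMr // dotC ler_pM2l.
have : dot (a - b) (a - b) <= 0.
  rewrite dotBl !dotBr (dotC b a); lra.
rewrite le_eqVlt ltNge dot_ge0 orbF dot_eq0 subr_eq0 => /eqP e.
by move: nab; rewrite e eqxx.
Qed.

End Roots.


Section Poset.
Variables (R : realType) (n : nat) (Phi Delta : seq 'rV[R]_n).
Notation vec := 'rV[R]_n.
Hypothesis RS : is_root_system Phi.
Hypothesis SS : is_simple_system Phi Delta.
Notation m := (size Delta).

Lemma delta_comb (i : 'I_m) :
  Delta`_i = \sum_(j < m) ((j == i)%:R : R) *: Delta`_j.
Proof.
rewrite (bigD1 i) //= eqxx scale1r big1 ?addr0 // => j /negPf ->.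
by rewrite scale0r.
Qed.

Lemma delta_in (i : 'I_m) : Delta`_i \in Delta.
Proof. by apply: mem_nth. Qed.

Lemma delta_root (i : 'I_m) : Delta`_i \in Phi.
Proof. by case: SS => _ S _ _; apply: S; exact: delta_in. Qed.

Lemma delta_pos (i : 'I_m) : is_pos_root Phi Delta Delta`_i.
Proof.
split; first exact: delta_root.
by exists (fun j => (j == i) : nat); rewrite [LHS]delta_comb.
Qed.

Lemma comb_add (c d : 'I_m -> nat) :
  \sum_(j < m) (c j)%:R *: Delta`_j + \sum_(j < m) (d j)%:R *: Delta`_j =
  \sum_(j < m) ((c j + d j)%N)%:R *: Delta`_j.
Proof. by rewrite -big_split; apply: eq_bigr => j _; rewrite natrD scalerDl. Qed.

Lemma comb_sub (c d : 'I_m -> nat) : (forall j, d j <= c j)%N ->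
  \sum_(j < m) (c j)%:R *: Delta`_j - \sum_(j < m) (d j)%:R *: Delta`_j =
  \sum_(j < m) ((c j - d j)%N)%:R *: Delta`_j.
Proof.
move=> H; rewrite -sumrB; apply: eq_bigr => j _.
by rewrite natrB // scalerBl.
Qed.

Lemma rp_le_diff (N : nat) : forall (b g : vec) (c : 'I_m -> nat),
  is_pos_root Phi Delta b -> is_pos_root Phi Delta g ->
  b - g = \sum_(j < m) (c j)%:R *: Delta`_j -> (\sum_(j < m) c j)%N = N ->
  rp_le Phi Delta g b.
Proof.
elim: N => [|N IH] b g c pb pg E SN.
  have -> : b = g.
    apply/eqP; rewrite -subr_eq0 E; apply/eqP; apply: big1 => j _.
    have : (c j <= 0)%N by rewrite -SN (bigD1 j) //= leq_addr.
    by rewrite leqn0 => /eqP ->; rewrite scale0r.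
  exact: rt_refl.
set d := b - g in E.
have dnz : d != 0.
  apply/eqP => d0; move: E; rewrite d0 => /esym E0.
  case: SS => _ _ LI _; have H := LI _ E0.
  have : (\sum_(j < m) c j)%N = 0%N.
    by apply: big1 => j _; apply/eqP; rewrite -(pnatr_eq0 R) H.
  by rewrite SN.
have dd : 0 < dot d d by apply: dot_gt0.
have [i [ci di]] : exists i : 'I_m, (0 < c i)%N /\ 0 < dot d Delta`_i.
  apply/not_existsP => H; move: dd; apply/negP; rewrite -leNgt.
  rewrite {2}E dot_sumr; apply: sumr_le0 => j _; rewrite dotZr.
  have := H j; case: (posnP (c j)) => [->|cp]; first by rewrite mul0r.
  move=> /not_andP [] //; move/negP; rewrite -leNgt => h.
  by rewrite mulr_ge0_le0.
have [gc Hg] : nonneg_int_comb Delta g by case: pg.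
set c' := fun j => (c j - (j == i))%N.
have c'le : forall j, ((j == i) <= c j)%N.
  by move=> j; case: eqP => [->|]. 
have Ec' : d - Delta`_i = \sum_(j < m) (c' j)%:R *: Delta`_j.
  rewrite E delta_comb comb_sub //.
have Sc' : (\sum_(j < m) c' j)%N = N.
  have e1 : (\sum_(j < m) c j = c i + \sum_(j < m | j != i) c j)%N by rewrite (bigD1 i).
  have e2 : (\sum_(j < m) c' j = c' i + \sum_(j < m | j != i) c' j)%N by rewrite (bigD1 i).
  have e3 : (\sum_(j < m | j != i) c' j = \sum_(j < m | j != i) c j)%N.
    by apply: eq_bigr => j /= /negPf; rewrite /c' => ->; rewrite subn0.
  rewrite e2 e3 /c' eqxx /=; move: SN; rewrite e1; move=> SN; by rewrite addnBAC // SN subn1.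
have dpos := delta_pos i.
move: di; rewrite /d dotBl subr_gt0 => di.
have [bpos|bneg] := ltP 0 (dot b Delta`_i).
  have [ebd|nbd] := eqVneq b Delta`_i.
    exfalso.
    have : \sum_(j < m) ((gc j + c j)%N)%:R *: Delta`_j =
           \sum_(j < m) ((j == i) : nat)%:R *: Delta`_j.
      by rewrite -comb_add -Hg -E /d addrC subrK -delta_comb.
    move/(coord_uniq SS) => H.
    have gc0 : forall j, gc j = 0%N.
      move=> j; have := H j; move/eqP; rewrite eqr_nat => /eqP.
      by case: (eqVneq j i) => [->|_] /=; lia.
    case: pg => gP _; move: (rs_root_nz RS gP); rewrite Hg big1 ?eqxx // => j _.
    by rewrite gc0 scale0r.
  have bdP : b - Delta`_i \in Phi.
    apply: rs_root_sub => //; [by case: pb | exact: delta_root].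
  have pbd : is_pos_root Phi Delta (b - Delta`_i).
    split => //; exists (fun j => (gc j + c' j)%N).
    by rewrite -comb_add -Hg -Ec' /d addrA [g + _]addrC subrK.
  apply: (rt_trans _ _ _ (b - Delta`_i)).
    apply: (IH _ _ c') => //.
    by rewrite -Ec' /d addrAC.
  apply: rt_step; split => //.
  by rewrite opprB addrC subrK delta_in.
have gneg : 0 < dot g (- Delta`_i) by rewrite dotNr oppr_gt0; exact: lt_le_trans di bneg.
have ngd : g != - Delta`_i.
  by apply/eqP => e; apply: (not_pos_neg RS SS dpos); rewrite -e.
have gdP : g + Delta`_i \in Phi.
  rewrite -[Delta`_i]opprK; apply: rs_root_sub => //; first by case: pg.
  by apply: rootNeg => //; exact: delta_root.
have pgd : is_pos_root Phi Delta (g + Delta`_i).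
  split => //; exists (fun j => (gc j + (j == i))%N).
  by rewrite -comb_add -Hg -delta_comb.
apply: (rt_trans _ _ _ (g + Delta`_i)).
  apply: rt_step; split => //.
  by rewrite addrC addKr delta_in.
apply: (IH _ _ c') => //.
by rewrite -Ec' /d opprD addrA.
Qed.

End Poset.


Section Prob.
Variables (R : realType) (n : nat) (Phi Delta : seq 'rV[R]_n) (Wl : seq 'M[R]_n).
Notation vec := 'rV[R]_n.
Hypothesis RS : is_root_system Phi.
Hypothesis SS : is_simple_system Phi Delta.
Hypothesis WE : weyl_enum Phi Wl.

Lemma antichain_dot (Psi : seq vec) : is_antichain Phi Delta Psi ->
  forall b g, b \in Psi -> g \in Psi -> b != g -> dot b g <= 0.
Proof.
case=> _ Ppos AC b g bP gP nbg; rewrite leNgt; apply/negP => pos.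
have [pb pg] := (Ppos b bP, Ppos g gP).
have bgP : b - g \in Phi by apply: rs_root_sub => //; [case: pb | case: pg].
case: (pos_or_neg RS SS bgP) => [[_ [c Hc]]|[_ [c Hc]]].
  apply: (AC g b gP bP); first by rewrite eq_sym.
  exact: (rp_le_diff RS SS (N := (\sum_(j < size Delta) c j)%N) pb pg Hc).
apply: (AC b g bP gP nbg).
by apply: (rp_le_diff RS SS (N := (\sum_(j < size Delta) c j)%N) pg pb _ erefl); rewrite -Hc opprB.
Qed.

Lemma count_flip a (E : pred 'M[R]_n) : a \in Phi ->
  count E Wl = count (fun w => E (refl_mx a *m w)) Wl.
Proof.
move=> aP; have anz := rs_root_nz RS aP.
pose f := fun w : 'M[R]_n => refl_mx a *m w.
have K : cancel f f.
  by move=> w; rewrite /f mulmxA refl_mxK // mul1mx.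
rewrite -[RHS](count_map f E).
apply/esym/permP; apply: uniq_perm.
- by rewrite (map_inj_uniq (can_inj K)); case: WE.
- by case: WE.
move=> x; case: WE => _ H; apply/mapP/idP.
  by case=> y /H yW ->; apply/H; apply: weyl_refl.
move=> /H xW; exists (refl_mx a *m x); last by rewrite K.
by apply/H; apply: weyl_refl.
Qed.

Lemma Xrv_root b w : b \in Phi -> w \in Wl ->
  Xrv Phi Delta b w = ~~ `[< is_pos_root Phi Delta (b *m w) >].
Proof.
move=> bP wW; have rP : b *m w \in Phi by apply: weyl_root => //; case: WE => _ /(_ w) [+ _]; apply.
rewrite /Xrv; case: (pos_or_neg RS SS rP) => h.
  rewrite (asboolT h) asboolF //= => h'; exact: (not_pos_neg RS SS h h').
by rewrite (asboolT h) asboolF // => h'; exact: (not_pos_neg RS SS h' h).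
Qed.

Lemma Xrv_flip_self b w : b \in Phi -> w \in Wl ->
  Xrv Phi Delta b (refl_mx b *m w) = ~~ Xrv Phi Delta b w.
Proof.
move=> bP wW; rewrite [in RHS]Xrv_root // negbK.
by rewrite /Xrv mulmxA refl_self ?(rs_root_nz RS) // mulNmx opprK.
Qed.

Lemma Xrv_flip_orth b g w : dot g b = 0 ->
  Xrv Phi Delta g (refl_mx b *m w) = Xrv Phi Delta g w.
Proof. by move=> h; rewrite /Xrv mulmxA refl_orth. Qed.

Lemma count_split (T : Type) (X Y : T -> bool) x (s : seq T) :
  count (fun w => X w == x) s =
  (count (fun w => (X w == x) && (Y w == true)) s +
   count (fun w => (X w == x) && (Y w == false)) s)%N.
Proof. by elim: s => //= w s ->; case: (X w == x); case: (Y w) => /=; lia. Qed.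

Lemma orth_indep b g : b \in Phi -> g \in Phi -> dot b g = 0 ->
  indep Wl (Xrv Phi Delta b) (Xrv Phi Delta g).
Proof.
move=> bP gP o.
set Xb := Xrv Phi Delta b; set Xg := Xrv Phi Delta g.
pose N x y := count (fun w => (Xb w == x) && (Xg w == y)) Wl.
have f1 : forall x y, N x y = N (~~ x) y.
  move=> x y; rewrite /N [LHS](count_flip (fun w => (Xb w == x) && (Xg w == y)) bP).
  apply: eq_in_count => w wW /=.
  rewrite /Xb /Xg Xrv_flip_self // Xrv_flip_orth; last by rewrite dotC.
  by case: (Xrv _ _ b w); case: x.
have f2 : forall x y, N x y = N x (~~ y).
  move=> x y; rewrite /N [LHS](count_flip (fun w => (Xb w == x) && (Xg w == y)) gP).
  apply: eq_in_count => w wW /=.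
  rewrite /Xb /Xg Xrv_flip_self // Xrv_flip_orth //.
  by case: (Xrv _ _ g w); case: y.
have Nc : forall x y, N x y = N true true.
  by move=> [] []; first [done | rewrite f2 //= | rewrite f1 //= | rewrite f1 f2 //=].
have cX : forall x, count (fun w => Xb w == x) Wl = (2 * N true true)%N.
  move=> x; rewrite (count_split Xb Xg) -/(N x true) -/(N x false) !Nc; lia.
have sw : forall x y, count (fun w => (Xg w == y) && (Xb w == x)) Wl = N x y.
  by move=> x y; apply: eq_count => w; rewrite andbC.
have cY : forall y, count (fun w => Xg w == y) Wl = (2 * N true true)%N.
  move=> y; rewrite (count_split Xg Xb) !sw !Nc; lia.
have sz : size Wl = (4 * N true true)%N.
  have -> : size Wl = (count (fun w => Xb w == true) Wl + count (fun w => Xb w == false) Wl)%N.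
    by elim: Wl => //= w s ->; case: (Xb w) => /=; lia.
  rewrite !cX; lia.
move=> x y; rewrite /prob -/(N x y) Nc cX cY sz.
set k := N true true.
have [->|kn] := eqVneq k 0%N; first by rewrite !muln0 /= !mul0r.
have kR : (k%:R : R) != 0 by rewrite pnatr_eq0.
rewrite !natrM; field; exact: kR.
Qed.

End Prob.


Section Quad.
Variables (R : realType) (n : nat) (Phi Delta : seq 'rV[R]_n) (Wl : seq 'M[R]_n).
Notation vec := 'rV[R]_n.
Hypothesis RS : is_root_system Phi.
Hypothesis SS : is_simple_system Phi Delta.
Hypothesis WE : weyl_enum Phi Wl.
Notation m := (size Delta).

Definition tn (b : vec) : R := (Num.sqrt (dot b b))^-1.
Definition un (b : vec) : vec := tn b *: b.

Lemma tn_gt0 b : b != 0 -> 0 < tn b.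
Proof. by move=> nz; rewrite /tn invr_gt0 sqrtr_gt0 dot_gt0. Qed.

Lemma tn_sq b : b != 0 -> tn b ^+ 2 * dot b b = 1.
Proof.
move=> nz; have d := dot_gt0 nz.
have s0 : Num.sqrt (dot b b) != 0 by rewrite gt_eqF // sqrtr_gt0.
by rewrite /tn exprVn sqr_sqrtr ?ltW // mulVf // gt_eqF.
Qed.

Lemma dot_un b g : dot (un b) (un g) = tn b * tn g * dot b g.
Proof. by rewrite /un dotZl dotZr mulrA. Qed.

Lemma dot_un_self b : b != 0 -> dot (un b) (un b) = 1.
Proof. by move=> nz; rewrite dot_un -expr2 tn_sq. Qed.

Lemma cryst_bound b g : b \in Phi -> g \in Phi -> dot b g < 0 ->
  dot b b * dot g g <= 4 * dot b g ^+ 2.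
Proof.
move=> bP gP neg.
have db : 0 < dot b b by apply/dot_gt0/(rs_root_nz RS bP).
have dg : 0 < dot g g by apply/dot_gt0/(rs_root_nz RS gP).
have [z1 H1] := cryst RS bP gP.
have [z2 H2] := cryst RS gP bP.
have r1 : (z1%:~R : R) < 0.
  by rewrite -H1 ltr_pdivrMr // mul0r dotC; lra.
have r2 : (z2%:~R : R) < 0.
  by rewrite -H2 ltr_pdivrMr // mul0r; lra.
have zz : (1 <= z1 * z2)%R.
  move: r1 r2; rewrite !ltrz0; lia.
have : 1 <= (z1%:~R : R) * z2%:~R by rewrite -intrM ler1z.
rewrite -H1 -H2 dotC.
have -> : 2 * dot b g / dot b b * (2 * dot b g / dot g g) =
          4 * dot b g ^+ 2 / (dot b b * dot g g).
  by field; rewrite ?gt_eqF.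
rewrite ler_pdivlMr ?mulr_gt0 // mul1r; lra.
Qed.

End Quad.


Lemma sum_sym (R : realType) (k : nat) (G : 'I_k -> 'I_k -> R) :
  (forall i j, G i j = G j i) ->
  \sum_(i < k) \sum_(j < k) G i j = \sum_(i < k) G i i + 2 * \sum_(i < k) \sum_(j < k | (i < j)%N) G i j.
Proof.
move=> sym.
have sp : forall i, \sum_(j < k) G i j =
    G i i + \sum_(j < k | (i < j)%N) G i j + \sum_(j < k | (j < i)%N) G i j.
  move=> i; rewrite (bigD1 i) //= (bigID (fun j : 'I_k => (i < j)%N)) /= addrA.
  congr (_ + _ + _); apply: eq_bigl => j.
    by apply/andb_idl => h; apply/eqP => e; move: h; rewrite e ltnn.
  by rewrite -leqNgt ltn_neqAle.
rewrite (eq_bigr _ (fun i _ => sp i)) !big_split /= -addrA; congr (_ + _).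
have -> : \sum_(i < k) \sum_(j < k | (j < i)%N) G i j = \sum_(i < k) \sum_(j < k | (i < j)%N) G i j.
  rewrite (eq_bigr (fun i : 'I_k => \sum_(j < k) (if (j < i)%N then G i j else 0))); last by move=> i _; rewrite big_mkcond.
  rewrite exchange_big /=; apply: eq_bigr => i _; rewrite [RHS]big_mkcond /=.
  by apply: eq_bigr => j _; rewrite sym.
by rewrite mulr2n mulrDl mul1r.
Qed.

Lemma count_sum (T : eqType) (a : pred T) (s : seq T) x0 :
  count a s = (\sum_(j < size s) a (nth x0 s j))%N.
Proof.
elim: s => [|x s IH] /=; first by rewrite big_ord0.
by rewrite big_ord_recl /= IH.
Qed.

Section Main.
Variables (R : realType) (n : nat) (Phi Delta : seq 'rV[R]_n) (Wl : seq 'M[R]_n).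
Notation vec := 'rV[R]_n.
Hypothesis RS : is_root_system Phi.
Hypothesis SS : is_simple_system Phi Delta.
Hypothesis WE : weyl_enum Phi Wl.
Notation m := (size Delta).

Definition nnc (y : vec) := exists r : 'I_m -> R,
  (forall k, 0 <= r k) /\ y = \sum_(k < m) r k *: Delta`_k.

Lemma nnc0 : nnc 0.
Proof.
exists (fun _ => 0); split => // ; by rewrite big1 // => k _; rewrite scale0r.
Qed.

Lemma nncD x y : nnc x -> nnc y -> nnc (x + y).
Proof.
case=> [r [r0 ->]] [s [s0 ->]]; exists (fun k => r k + s k); split.
  by move=> k; rewrite addr_ge0.
by rewrite -big_split; apply: eq_bigr => k _; rewrite scalerDl.
Qed.

Lemma nncZ a x : 0 <= a -> nnc x -> nnc (a *: x).
Proof.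
move=> a0 [r [r0 ->]]; exists (fun k => a * r k); split.
  by move=> k; rewrite mulr_ge0.
by rewrite scaler_sumr; apply: eq_bigr => k _; rewrite scalerA.
Qed.

Lemma nnc_pos v : is_pos_root Phi Delta v -> nnc v.
Proof.
case=> _ [c ->]; exists (fun k => (c k)%:R); split => // k.
Qed.

Lemma nnc_sum (I : Type) (r : seq I) (P : pred I) (F : I -> vec) :
  (forall i, P i -> nnc (F i)) -> nnc (\sum_(i <- r | P i) F i).
Proof.
move=> H; apply: (big_ind nnc) => //; [exact: nnc0 | exact: nncD].
Qed.

Lemma nnc_key v a y : is_pos_root Phi Delta v -> 0 < a -> nnc y -> a *: v + y != 0.
Proof.
move=> pv a0 [r [r0 Hy]]; have [vP [c Hv]] := pv.
apply/eqP => e.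
have E : \sum_(k < m) (a * (c k)%:R + r k) *: Delta`_k = a *: v + y.
  rewrite Hv Hy scaler_sumr -big_split; apply: eq_bigr => k _.
  by rewrite scalerA scalerDl.
rewrite e in E.
case: SS => _ _ LI _; have Z := LI _ E.
have ck : forall k, (c k)%:R = 0 :> R.
  move=> k; have := Z k; have := r0 k.
  have : 0 <= (c k)%:R :> R by [].
  move=> h1 h2 h3; nra.
move: (rs_root_nz RS vP); rewrite Hv big1 ?eqxx // => k _.
by rewrite ck scale0r.
Qed.

Lemma dep_neg (Psi : seq vec) b g : is_antichain Phi Delta Psi ->
  b \in Psi -> g \in Psi -> b != g -> dependent Phi Delta Wl b g -> dot b g < 0.
Proof.
move=> AC bP gP nbg dep; have [_ Ppos _] := AC.
rewrite lt_neqAle (antichain_dot RS SS AC bP gP nbg) andbT.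
apply/eqP => o; move: dep; rewrite /dependent asboolT //.
by apply: (orth_indep RS SS WE); [case: (Ppos b bP) | case: (Ppos g gP) | ].
Qed.

Lemma dep_un (b g : vec) : b \in Phi -> g \in Phi -> dot b g < 0 ->
  dot (un b) (un g) <= - (1 / 2).
Proof.
move=> bP gP neg; rewrite dot_un.
have bn := rs_root_nz RS bP; have gn := rs_root_nz RS gP.
have db : 0 < dot b b by apply/dot_gt0/bn.
have dg : 0 < dot g g by apply/dot_gt0/gn.
have tb := tn_gt0 bn; have tg := tn_gt0 gn.
have sb := tn_sq bn; have sg := tn_sq gn.
have cb := cryst_bound RS bP gP neg.
set p := tn b * tn g * dot b g.
have pn : p < 0 by rewrite /p pmulr_rlt0 // mulr_gt0.
have e : p ^+ 2 * (dot b b * dot g g) = dot b g ^+ 2.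
  have h : tn b ^+ 2 * dot b b * (tn g ^+ 2 * dot g g) * dot b g ^+ 2 = dot b g ^+ 2.
    by rewrite sb sg !mul1r.
  rewrite -[RHS]h /p; ring.
have : 1 <= 4 * p ^+ 2.
  rewrite -(ler_pM2r (mulr_gt0 db dg)) mul1r -mulrA e //.
move=> h; nra.
Qed.

End Main.


Section Final.
Variables (R : realType) (n : nat) (Phi Delta : seq 'rV[R]_n) (Wl : seq 'M[R]_n).
Notation vec := 'rV[R]_n.
Hypothesis RS : is_root_system Phi.
Hypothesis SS : is_simple_system Phi Delta.
Hypothesis WE : weyl_enum Phi Wl.

Lemma part2 (Psi : seq vec) : is_antichain Phi Delta Psi ->
  (\sum_(i < size Psi) \sum_(j < size Psi | (i < j)%N)
          dependent Phi Delta Wl Psi`_i Psi`_j <= (size Psi).-1)%N.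
Proof.
move=> AC; have [uq Ppos _] := AC.
have inP : forall i : 'I_(size Psi), Psi`_i \in Psi by move=> i; apply: mem_nth.
have rP : forall i : 'I_(size Psi), Psi`_i \in Phi by move=> i; case: (Ppos _ (inP i)).
have nz : forall i : 'I_(size Psi), Psi`_i != 0 by move=> i; apply: (rs_root_nz RS).
have neq : forall i j : 'I_(size Psi), i != j -> Psi`_i != Psi`_j.
  by move=> i j; rewrite nth_uniq.
have [k0|kpos] := posnP (size Psi).
  by rewrite big1 // => i _; move: (ltn_ord i); move: (nat_of_ord i) => v; rewrite k0.
set E := (\sum_(i < size Psi) \sum_(j < size Psi | (i < j)%N) _)%N.
set G := fun i j : 'I_(size Psi) => dot (un Psi`_i) (un Psi`_j).
set x := \sum_(i < size Psi) un Psi`_i.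
have xnz : x != 0.
  pose i0 : 'I_(size Psi) := Ordinal kpos.
  rewrite /x (bigD1 i0) //= /un; apply: (nnc_key RS SS) => //; first exact: (Ppos _ (inP i0)).
    exact: (tn_gt0 (nz i0)).
  apply: nnc_sum => i _; apply: nncZ; first exact/ltW/tn_gt0.
  exact/nnc_pos/Ppos/inP.
have dx := dot_gt0 xnz.
have ex : dot x x = \sum_(i < size Psi) \sum_(j < size Psi) G i j.
  rewrite /x dot_suml; apply: eq_bigr => i _; rewrite dot_sumr //.
rewrite ex sum_sym in dx; last by move=> i j; rewrite /G dotC.
have d1 : \sum_(i < size Psi) G i i = (size Psi)%:R.
  rewrite (eq_bigr (fun _ => 1)); last by move=> i _; rewrite /G dot_un_self.
  by rewrite sumr_const card_ord.
have eE : (E%:R : R) = \sum_(i < size Psi) \sum_(j < size Psi | (i < j)%N)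
      ((dependent Phi Delta Wl Psi`_i Psi`_j : nat)%:R).
  by rewrite /E natr_sum; apply: eq_bigr => i _; rewrite natr_sum.
have bnd : \sum_(i < size Psi) \sum_(j < size Psi | (i < j)%N) G i j <=
           - (1 / 2) * E%:R.
  rewrite eE mulr_sumr; apply: ler_sum => i _; rewrite mulr_sumr.
  apply: ler_sum => j ij.
  have nij : Psi`_i != Psi`_j by apply: neq; apply/eqP => e; move: ij; rewrite e ltnn.
  case: (boolP (dependent Phi Delta Wl Psi`_i Psi`_j)) => dep /=.
    rewrite mulr1; apply: (dep_un RS) => //.
    exact: (dep_neg RS SS WE AC (inP i) (inP j) nij dep).
  rewrite mulr0 /G dot_un; apply: mulr_ge0_le0.
    by apply: mulr_ge0; apply/ltW/tn_gt0.
  exact: (antichain_dot RS SS AC (inP i) (inP j) nij).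
rewrite d1 in dx.
have : (E%:R : R) < (size Psi)%:R by lra.
rewrite ltr_nat; lia.
Qed.

Lemma part3 (Psi : seq vec) : is_antichain Phi Delta Psi ->
  forall b, b \in Psi ->
    (count (fun g => (g != b) && dependent Phi Delta Wl b g) Psi <= 3)%N.
Proof.
move=> AC b bP; have [uq Ppos _] := AC.
have inP : forall i : 'I_(size Psi), Psi`_i \in Psi by move=> i; apply: mem_nth.
have rP : forall i : 'I_(size Psi), Psi`_i \in Phi by move=> i; case: (Ppos _ (inP i)).
have nz : forall i : 'I_(size Psi), Psi`_i != 0 by move=> i; apply: (rs_root_nz RS).
have neq : forall i j : 'I_(size Psi), i != j -> Psi`_i != Psi`_j.
  by move=> i j; rewrite nth_uniq.
have bR : b \in Phi by case: (Ppos _ bP).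
have bnz : b != 0 by apply: (rs_root_nz RS).
rewrite (count_sum _ _ 0).
set S := fun j : 'I_(size Psi) => (Psi`_j != b) && dependent Phi Delta Wl b Psi`_j.
set K := (\sum_(j < size Psi) _)%N.
have eK : (K%:R : R) = \sum_(j < size Psi) ((S j : nat)%:R).
  by rewrite /K natr_sum.
set y := \sum_(j < size Psi | S j) un Psi`_j.
set x := (2 * tn b) *: b + y.
have xnz : x != 0.
  apply: (nnc_key RS SS); first exact: (Ppos _ bP).
    by rewrite mulr_gt0 // tn_gt0.
  apply: nnc_sum => i _; apply: nncZ; first exact/ltW/tn_gt0.
  exact/nnc_pos/Ppos/inP.
have dx := dot_gt0 xnz.
have ex : dot x x = 4 + 4 * dot (un b) y + dot y y.
  rewrite /x -scalerA -/(un b) dotDl !dotDr !dotZl !dotZr (dotC y b).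
  set t := tn b; set d := dot b b; set e := dot b y; set f := dot y y.
  have h : t ^+ 2 * d = 1 by exact: tn_sq.
  transitivity (4 * (t ^+ 2 * d) + 4 * (t * e) + f); first by ring.
  by rewrite h mulr1.
have b1 : dot (un b) y <= \sum_(j < size Psi) (S j : nat)%:R * (- (1 / 2)).
  rewrite /y dot_sumr big_mkcond /=; apply: ler_sum => j _.
  case: (boolP (S j)) => Sj /=; last by rewrite mul0r.
  move: Sj => /andP [nb dep]; have nb' : b != Psi`_j by rewrite eq_sym.
  have := dep_un RS bR (rP j) (dep_neg RS SS WE AC bP (inP j) nb' dep).
  rewrite /un; lra.
have b2 : dot y y <= \sum_(j < size Psi) (S j : nat)%:R.
  rewrite /y dot_suml big_mkcond /=; apply: ler_sum => j _.
  case: (boolP (S j)) => Sj /=; last by [].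
  rewrite dot_sumr (bigD1 j) //= dot_un_self //.
  rewrite -[X in _ <= X]addr0 lerD2l; apply: sumr_le0 => l /andP [Sl lj].
  rewrite dot_un; apply: mulr_ge0_le0; first by apply: mulr_ge0; apply/ltW/tn_gt0.
  apply: (antichain_dot RS SS AC (inP j) (inP l)).
  by apply: neq; rewrite eq_sym.
have : (K%:R : R) < 4.
  move: dx b1 b2; rewrite ex -mulr_suml -eK; lra.
by rewrite ltr_nat.
Qed.

End Final.

Unset Implicit Arguments.
Set Strict Implicit.

Theorem lemma4p3 (R : realType) (n : nat) (Phi Delta : seq 'rV[R]_n)
  (Wl : seq 'M[R]_n) (Psi : seq 'rV[R]_n) :
  is_root_system Phi -> is_simple_system Phi Delta -> weyl_enum Phi Wl ->
  is_antichain Phi Delta Psi ->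
  [/\ (forall b g, b \in Psi -> g \in Psi -> b != g -> dot b g <= 0),
      (\sum_(i < size Psi) \sum_(j < size Psi | (i < j)%N)
          dependent Phi Delta Wl Psi`_i Psi`_j <= (size Psi).-1)%N &
      (forall b, b \in Psi ->
         (count (fun g => (g != b) && dependent Phi Delta Wl b g) Psi <= 3)%N)].
Proof.
move=> RS SS WE AC; split.
- exact: (antichain_dot RS SS AC).
- exact: (part2 RS SS WE AC).
- exact: (part3 RS SS WE AC).
Qed.
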